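(* Assume $n>3t+2d$. In any execution of Algorithm 1, if a correct process $p_i$ mbrb-broadcasts $(m,sn)$ and $d<c-\sqrt{c\cdot\frac{n+t}{2}}$, then at least $c-d$ correct processes mbrb-deliver $(m,sn,i)$ at most three communication steps after the mbrb-broadcast.
   Context: System model. There are $n$ asynchronous processes $p_1,\dots,p_n$ with distinct known identities. Up to $t$ are Byzantine (arbitrary behavior); the rest are correct; $c$ is the number of correct processes in the execution, $n-t\le c\le n$. The network is fully connected, asynchronous, never corrupts/duplicates/creates messages; ''broadcast $M$'' sends $M$ to all $n$ processes; a message adversary may suppress, per broadcast by a correct process, up to $d$ ($0\le d<c$) copies addressed to correct processes, all other copies among correct processes being received. Signatures are unforgeable and public keys are known. Time is measured in communication steps: local computation takes zero time and every imp-message has the same transfer delay of one step. Algorithm 1 (code for $p_i$). Each process stores, for each triplet $(m,sn,j)$, a set of saved valid signatures of that triplet, at most one per signer. On $\mathrm{mbrb\_broadcast}(m,sn)$: $p_i$ saves its own signature of $(m,sn,i)$ and broadcasts $\mathrm{BUNDLE}(m,sn,i,S)$, $S$ the saved signatures for $(m,sn,i)$. On receiving $\mathrm{BUNDLE}(m,sn,j,sigs)$: if $p_i$ has not already mbrb-delivered some $(-,sn,j)$ and $sigs$ contains a valid signature of $(m,sn,j)$ by $p_j$, then: (1) save all new valid signatures of $(m,sn,j)$ in $sigs$; (2) if $p_i$ has not yet signed any $(-,sn,j)$, save its own signature of $(m,sn,j)$ and broadcast $\mathrm{BUNDLE}(m,sn,j,\text{all saved signatures for }(m,sn,j))$; (3)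 if strictly more than $\frac{n+t}{2}$ signatures for $(m,sn,j)$ are saved, broadcast $\mathrm{BUNDLE}(m,sn,j,\text{all saved signatures})$ and mbrb-deliver $(m,sn,j)$. *)

(* Defs.v *)
(* Model of Algorithm 1 (signature-bundle MBRB) executed under
   the timing assumption "every message takes exactly one communication step". *)
From HB Require Import structures.
From mathcomp Require Import all_boot all_order all_algebra.
Set Implicit Arguments.
Unset Strict Implicit.
Unset Printing Implicit Defensive.
Import Order.TTheory GRing.Theory Num.Theory.

Section Model.
Variables (n : nat) (M : eqType) (R : rcfType).

(* Signatures are unforgeable, so a set of
   valid signatures of the triplet (m,sn,j) is represented by the set of its
   signers (at most one signature per signer).  Invalid signatures / signatures
   of other triplets are ignored by the algorithm and are therefore not modeled. *)
Record bundle := Bundle { b_m : M; b_sn : nat; b_j : 'I_n; b_sigs : {set 'I_n} }.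

Record pstate := PState {
  saved  : M -> nat -> 'I_n -> {set 'I_n};
  signed : nat -> 'I_n -> bool;
  deliv  : nat -> 'I_n -> bool
}.

Definition init_state : pstate :=
  PState (fun _ _ _ => set0) (fun _ _ => false) (fun _ _ => false).

Definition upd_saved (st : pstate) m sn j (S : {set 'I_n}) : pstate :=
  PState (fun m' sn' j' => if [&& m' == m, sn' == sn & j' == j] then S
                           else saved st m' sn' j')
         (signed st) (deliv st).

Definition set_signed (st : pstate) sn j : pstate :=
  PState (saved st) (fun sn' j' => ((sn' == sn) && (j' == j)) || signed st sn' j')
         (deliv st).

Definition set_deliv (st : pstate) sn j : pstate :=
  PState (saved st) (signed st)
         (fun sn' j' => ((sn' == sn) && (j' == j)) || deliv st sn' j').

(* Result of a local step: new state, broadcast messages (in order), and the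
   triplet mbrb-delivered during the step (if any). *)
Definition step_result := (pstate * seq bundle * option (M * nat * 'I_n))%type.

Definition step_bcast (i : 'I_n) (st : pstate) (m : M) (sn : nat) : step_result :=
  let S := i |: saved st m sn i in
  (set_signed (upd_saved st m sn i S) sn i, [:: Bundle m sn i S], None).

Definition step_recv (t : nat) (i : 'I_n) (st : pstate) (b : bundle) : step_result :=
  let: Bundle m sn j sigs := b in
  if ~~ deliv st sn j && (j \in sigs) then
    let st1 := upd_saved st m sn j (saved st m sn j :|: sigs) in
    let p2 := if ~~ signed st1 sn j then
                let S2 := i |: saved st1 m sn j in
                (set_signed (upd_saved st1 m sn j S2) sn j, [:: Bundle m sn j S2])
              else (st1, [::]) in
    let st2 := p2.1 in
    let S3 := saved st2 m sn j in
    if (n + t < 2 * #|S3|)%N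
    then (set_deliv st2 sn j, p2.2 ++ [:: Bundle m sn j S3], Some (m, sn, j))
    else (st2, p2.2, None)
  else (st, [::], None).

(* Origin of a received message: the r-th message broadcast during the k-th
   event of the execution (a correct process), or a Byzantine process q. *)
Inductive source := FromCorrect (k r : nat) | FromByz (q : 'I_n).

Inductive input := InBcast (m : M) (sn : nat) | InRecv (src : source) (b : bundle).

Record event := Event { e_proc : 'I_n; e_time : R; e_in : input }.

Definition step (t : nat) (i : 'I_n) (st : pstate) (x : input) : step_result :=
  match x with
  | InBcast m sn => step_bcast i st m sn
  | InRecv _ b => step_recv t i st b
  end.

Definition state_before (t : nat) (ev : seq event) (p : 'I_n) (x : nat) : pstate :=
  foldl (fun st e => if e_proc e == p then (step t p st (e_in e)).1.1 else st)
        init_state (take x ev).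

Definition result_at (t : nat) (ev : seq event) (x : nat) : option step_result :=
  if onth ev x is Some e
  then Some (step t (e_proc e) (state_before t ev (e_proc e) x) (e_in e))
  else None.

Definition out_at t ev x : seq bundle :=
  if result_at t ev x is Some r then r.1.2 else [::].

Definition deliv_at t ev x : option (M * nat * 'I_n) :=
  if result_at t ev x is Some r then r.2 else None.

Definition receives (ev : seq event) (p : 'I_n) (k r : nat) : Prop :=
  exists x e b, onth ev x = Some e /\ e_proc e = p /\ e_in e = InRecv (FromCorrect k r) b.

(* Well-formed execution (prefix) of Algorithm 1, with Byzantine set B, message
   adversary power d, all messages between correct processes taking exactly one
   step, and every non-suppressed copy of every broadcast sent at time s with
   s + 1 <= T having been received. *)
Definition valid_exec (t d : nat) (B : {set 'I_n}) (ev : seq event) (T : R) : Prop :=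
  (forall x e, onth ev x = Some e -> e_proc e \notin B) /\
  (forall x y ex ey, (x < y)%N -> onth ev x = Some ex -> onth ev y = Some ey ->
     (e_time ex <= e_time ey)%R) /\
  (forall x e k r b, onth ev x = Some e -> e_in e = InRecv (FromCorrect k r) b ->
     (k < x)%N /\ exists ek, onth ev k = Some ek /\ onth (out_at t ev k) r = Some b /\
       e_time e = (e_time ek + 1)%R) /\
  (forall x y ex ey k r b b', onth ev x = Some ex -> onth ev y = Some ey ->
     e_proc ex = e_proc ey -> e_in ex = InRecv (FromCorrect k r) b ->
     e_in ey = InRecv (FromCorrect k r) b' -> x = y) /\
  (* messages from Byzantine processes: signatures are unforgeable, so a
     signature of a correct process s on (m,sn,j) can appear only once s has
     signed (m,sn,j) *)
  (forall x e q b, onth ev x = Some e -> e_in e = InRecv (FromByz q) b ->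
     q \in B /\ forall s, s \in b_sigs b -> s \notin B ->
       s \in saved (state_before t ev s x) (b_m b) (b_sn b) (b_j b)) /\
  (forall x y ex ey m m' sn, onth ev x = Some ex -> onth ev y = Some ey ->
     e_proc ex = e_proc ey -> e_in ex = InBcast m sn -> e_in ey = InBcast m' sn -> x = y) /\
  (* message adversary: per broadcast of a correct process, at most d copies to
     correct processes are suppressed (all others received, within one step) *)
  (forall k ek r b, onth ev k = Some ek -> onth (out_at t ev k) r = Some b ->
     (e_time ek + 1 <= T)%R ->
     exists P : {set 'I_n}, P \subset ~: B /\ (n - #|B| - d <= #|P|)%N /\
       forall p, p \in P -> receives ev p k r).

End Model.

(* Main.v *)
Require Import Defs.
From HB Require Import structures.
From mathcomp Require Import all_boot all_order all_algebra.
From mathcomp Require Import ring lra.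
From Stdlib Require Import IndefiniteDescription.
Import Order.TTheory GRing.Theory Num.Theory.
Set Implicit Arguments. Unset Strict Implicit.

Lemma recv_acc_spec n (M : eqType) t q (st : pstate n M) (m0 : M) (sn0 : nat) (j0 : 'I_n) (sigs : {set 'I_n}) :
  ~~ deliv st sn0 j0 -> j0 \in sigs ->
  let S1 := saved st m0 sn0 j0 :|: sigs in
  let S2 := if signed st sn0 j0 then S1 else q |: S1 in
  let dl := (n + t < 2 * #|S2|)%N in
  forall src, let r := step t q st (InRecv src (Bundle m0 sn0 j0 sigs)) in
  (forall m s j, saved r.1.1 m s j =
      if [&& m == m0, s == sn0 & j == j0] then S2 else saved st m s j) /\
  (forall s j, signed r.1.1 s j = ((s == sn0) && (j == j0)) || signed st s j) /\
  (forall s j, deliv r.1.1 s j = [&& dl, s == sn0 & j == j0] || deliv st s j) /\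
  r.1.2 = (if signed st sn0 j0 then [::] else [:: Bundle m0 sn0 j0 S2]) ++
          (if dl then [:: Bundle m0 sn0 j0 S2] else [::]) /\
  r.2 = (if dl then Some (m0, sn0, j0) else None).
Proof.
move=> hd hj S1 S2 dl src r.
rewrite /r /= /step_recv hd hj /=.
rewrite /dl /S2 /S1; case hs: (signed st sn0 j0) => /=; rewrite !eqxx /=;
  case: ifP => hth /=.
all: (split; [move=> m s j; by case: ([&& m == m0, s == sn0 & j == j0])|]).
all: (split; [move=> s j; try done;
   case: (boolP ((s == sn0) && (j == j0))) => //= /andP [/eqP -> /eqP ->]; by rewrite hs|]).
all: (split; [move=> s j; rewrite ?andbF ?andbT //= |]).
all: split => //.
Qed.

Lemma recv_rej_spec n (M : eqType) t q (st : pstate n M) (m0 : M) (sn0 : nat) (j0 : 'I_n) (sigs : {set 'I_n}) :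
  ~~ (~~ deliv st sn0 j0 && (j0 \in sigs)) ->
  step_recv t q st (Bundle m0 sn0 j0 sigs) = (st, [::], None).
Proof. by rewrite /step_recv => /negbTE ->. Qed.

Lemma bcast_spec n (M : eqType) t q (st : pstate n M) m0 sn0 :
  let S := q |: saved st m0 sn0 q in
  let r := step t q st (InBcast n m0 sn0) in
  (forall m s j, saved r.1.1 m s j =
      if [&& m == m0, s == sn0 & j == q] then S else saved st m s j) /\
  (forall s j, signed r.1.1 s j = ((s == sn0) && (j == q)) || signed st s j) /\
  (forall s j, deliv r.1.1 s j = deliv st s j) /\
  r.1.2 = [:: Bundle m0 sn0 q S] /\ r.2 = None.
Proof. by []. Qed.

Lemma step_mono n (M : eqType) t q (st : pstate n M) inp :
  (forall m s j, saved st m s j \subset saved (step t q st inp).1.1 m s j) /\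
  (forall s j, signed st s j -> signed (step t q st inp).1.1 s j) /\
  (forall s j, deliv st s j -> deliv (step t q st inp).1.1 s j).
Proof.
case: inp => [m0 sn0 | src [m0 sn0 j0 sigs]].
  have [hS [hs [hd _]]] := bcast_spec t q st m0 sn0.
  split; [|split].
  - move=> m s j; rewrite hS; case: ifP => // /and3P [/eqP-> /eqP-> /eqP->]; exact: subsetUr.
  - by move=> s j; rewrite hs => ->; rewrite orbT.
  - by move=> s j; rewrite hd.
case: (boolP (~~ deliv st sn0 j0 && (j0 \in sigs))) => [/andP [hd hj]|hr]; last first.
  by rewrite /= /step_recv (negbTE hr).
have [hS [hs [hdl _]]] := recv_acc_spec t q m0 hd hj src.
split; [|split].
- move=> m s j; rewrite hS; case: ifP => // /and3P [/eqP-> /eqP-> /eqP->].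
  case: (signed st sn0 j0); first exact: subsetUl.
  exact: subset_trans (subsetUl _ _) (subsetUr _ _).
- by move=> s j; rewrite hs => ->; rewrite orbT.
- by move=> s j; rewrite hdl => ->; rewrite orbT.
Qed.

Lemma step_out n (M : eqType) t q (st : pstate n M) inp r b :
  onth (step t q st inp).1.2 r = Some b ->
  b_sigs b = saved (step t q st inp).1.1 (b_m b) (b_sn b) (b_j b) /\ b_j b \in b_sigs b.
Proof.
case: inp => [m0 sn0 | src [m0 sn0 j0 sigs]].
  have [hS [hs [hd [ho _]]]] := bcast_spec t q st m0 sn0.
  rewrite ho => /onth1P [_ <-]; rewrite hS !eqxx /=; split => //; exact: setU11.
case: (boolP (~~ deliv st sn0 j0 && (j0 \in sigs))) => [/andP [hd hj]|hr]; last first.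
  by rewrite /= /step_recv (negbTE hr) onth0n.
have [hS [hs [hdl [ho _]]]] := recv_acc_spec t q m0 hd hj src.
have hj2 : j0 \in (if signed st sn0 j0 then saved st m0 sn0 j0 :|: sigs
                   else q |: (saved st m0 sn0 j0 :|: sigs)).
  by case: signed; rewrite ?in_setU1 in_setU hj ?orbT.
rewrite ho => hb.
have -> : b = Bundle m0 sn0 j0 (if signed st sn0 j0 then saved st m0 sn0 j0 :|: sigs
                   else q |: (saved st m0 sn0 j0 :|: sigs)).
  move: hb; case: signed; case: ifP => _ /=;
  (case: r => [|[|r]] /=; rewrite ?onth0n //; by case=> <-).
by rewrite /= hS !eqxx.
Qed.

Lemma step_saved_src n (M : eqType) t q (st : pstate n M) inp m s j :
  j \in saved (step t q st inp).1.1 m s j ->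
  j \in saved st m s j \/ (inp = InBcast n m s /\ q = j) \/
  exists src sigs, inp = InRecv src (Bundle m s j sigs) /\ j \in sigs.
Proof.
case: inp => [m0 sn0 | src [m0 sn0 j0 sigs]].
  have [hS _] := bcast_spec t q st m0 sn0.
  rewrite hS; case: ifP => [/and3P [/eqP-> /eqP-> /eqP->] _|_ ->]; last by left.
  by right; left.
case: (boolP (~~ deliv st sn0 j0 && (j0 \in sigs))) => [/andP [hd hj]|hr]; last first.
  by rewrite /= /step_recv (negbTE hr) => ->; left.
have [hS _] := recv_acc_spec t q m0 hd hj src.
rewrite hS; case: ifP => [/and3P [/eqP-> /eqP-> /eqP->] _|_ ->]; last by left.
by right; right; exists src, sigs.
Qed.

Lemma step_signed_new n (M : eqType) t q (st : pstate n M) inp s j :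
  ~~ signed st s j -> signed (step t q st inp).1.1 s j ->
  exists r m' S, onth (step t q st inp).1.2 r = Some (Bundle m' s j S) /\ q \in S.
Proof.
move=> hns.
case: inp => [m0 sn0 | src [m0 sn0 j0 sigs]].
  have [_ [hs [_ [ho _]]]] := bcast_spec t q st m0 sn0.
  rewrite hs (negbTE hns) orbF => /andP [/eqP -> /eqP ->].
  by exists 0, m0, (q |: saved st m0 sn0 q); rewrite ho; split => //; exact: setU11.
case: (boolP (~~ deliv st sn0 j0 && (j0 \in sigs))) => [/andP [hd hj]|hr]; last first.
  by rewrite /= /step_recv (negbTE hr) (negbTE hns).
have [_ [hs [_ [ho _]]]] := recv_acc_spec t q m0 hd hj src.
rewrite hs (negbTE hns) orbF => /andP [/eqP E1 /eqP E2]; subst s j.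
exists 0, m0, (q |: (saved st m0 sn0 j0 :|: sigs)); rewrite ho (negbTE hns) /=.
split => //; exact: setU11.
Qed.

Lemma step_deliv_new n (M : eqType) t q (st : pstate n M) inp s j :
  ~~ deliv st s j -> deliv (step t q st inp).1.1 s j ->
  exists m', (step t q st inp).2 = Some (m', s, j) /\ j \in saved (step t q st inp).1.1 m' s j.
Proof.
move=> hnd.
case: inp => [m0 sn0 | src [m0 sn0 j0 sigs]].
  have [_ [_ [hd _]]] := bcast_spec t q st m0 sn0.
  by rewrite hd (negbTE hnd).
case: (boolP (~~ deliv st sn0 j0 && (j0 \in sigs))) => [/andP [hd hj]|hr]; last first.
  by rewrite /= /step_recv (negbTE hr) (negbTE hnd).
have [hS [_ [hdl [_ hr]]]] := recv_acc_spec t q m0 hd hj src.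
rewrite hdl (negbTE hnd) orbF => /and3P [hth /eqP E1 /eqP E2]; subst s j.
exists m0; rewrite hr hth; split => //.
rewrite hS !eqxx /=; by case: signed; rewrite ?in_setU1 in_setU hj ?orbT.
Qed.

Lemma step_deliv_signed n (M : eqType) t q (st : pstate n M) inp :
  (forall s j, deliv st s j -> signed st s j) ->
  (forall s j, deliv (step t q st inp).1.1 s j -> signed (step t q st inp).1.1 s j).
Proof.
move=> H.
case: inp => [m0 sn0 | src [m0 sn0 j0 sigs]].
  have [_ [hs [hd _]]] := bcast_spec t q st m0 sn0.
  by move=> s j; rewrite hd hs => /H ->; rewrite orbT.
case: (boolP (~~ deliv st sn0 j0 && (j0 \in sigs))) => [/andP [hd hj]|hr]; last first.
  by rewrite /= /step_recv (negbTE hr).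
have [_ [hs [hdl _]]] := recv_acc_spec t q m0 hd hj src.
move=> s j; rewrite hdl hs => /orP [/and3P [_ -> ->] //|/H ->]; by rewrite orbT.
Qed.

Lemma step_accept n (M : eqType) t q (st : pstate n M) (src : source n) (m0 : M) sn0 (j0 : 'I_n) (sigs : {set 'I_n}) :
  ~~ deliv st sn0 j0 -> j0 \in sigs ->
  let st' := (step t q st (InRecv src (Bundle m0 sn0 j0 sigs))).1.1 in
  sigs \subset saved st' m0 sn0 j0 /\ signed st' sn0 j0 /\
  ((n + t < 2 * #|saved st' m0 sn0 j0|)%N -> deliv st' sn0 j0).
Proof.
move=> hd hj st'.
have [hS [hs [hdl _]]] := recv_acc_spec t q m0 hd hj src.
rewrite /st' hS hs hdl !eqxx /=; split; last split => //.
  case: signed; first exact: subsetUr.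
  exact: subset_trans (subsetUr _ _) (subsetUr _ _).
by move=> ->.
Qed.

Lemma step_deliv_res n (M : eqType) t q (st : pstate n M) inp m' s j :
  (step t q st inp).2 = Some (m', s, j) ->
  exists r S, onth (step t q st inp).1.2 r = Some (Bundle m' s j S) /\ (n + t < 2 * #|S|)%N.
Proof.
case: inp => [m0 sn0 | src [m0 sn0 j0 sigs]].
  by have [_ [_ [_ [_ ->]]]] := bcast_spec t q st m0 sn0.
case: (boolP (~~ deliv st sn0 j0 && (j0 \in sigs))) => [/andP [hd hj]|hr]; last first.
  by rewrite /= /step_recv (negbTE hr).
have [_ [_ [_ [ho hr]]]] := recv_acc_spec t q m0 hd hj src.
rewrite hr ho; case: ifP => hth // [<- <- <-].
move: hth; case: (signed st sn0 j0) => /= hth;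
  first [by exists 0; eexists; split; [reflexivity|] | by exists 1; eexists; split; [reflexivity|]].
Qed.

Lemma sb_succ n (M : eqType) (R : rcfType) t (ev : seq (event n M R)) p x :
  state_before t ev p x.+1 =
  if onth ev x is Some e then
    (if e_proc e == p then (step t p (state_before t ev p x) (e_in e)).1.1
     else state_before t ev p x)
  else state_before t ev p x.
Proof.
rewrite /state_before; case h: (onth ev x) => [e|].
  have hx : x < size ev by rewrite -onthTE h.
  by rewrite (take_nth e hx) foldl_rcons (@onth_nth _ e e ev x h).
have hx : size ev <= x by rewrite -onthNE h.
by rewrite !take_oversize // (leq_trans hx).
Qed.

Lemma sb0 n (M : eqType) (R : rcfType) t (ev : seq (event n M R)) p :
  state_before t ev p 0 = init_state n M.
Proof. by rewrite /state_before take0. Qed.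

Lemma out_at_eq n (M : eqType) (R : rcfType) t (ev : seq (event n M R)) x e :
  onth ev x = Some e ->
  out_at t ev x = (step t (e_proc e) (state_before t ev (e_proc e) x) (e_in e)).1.2.
Proof. by rewrite /out_at /result_at => ->. Qed.

Lemma deliv_at_eq n (M : eqType) (R : rcfType) t (ev : seq (event n M R)) x e :
  onth ev x = Some e ->
  deliv_at t ev x = (step t (e_proc e) (state_before t ev (e_proc e) x) (e_in e)).2.
Proof. by rewrite /deliv_at /result_at => ->. Qed.

Lemma sb_after n (M : eqType) (R : rcfType) t (ev : seq (event n M R)) x e :
  onth ev x = Some e ->
  state_before t ev (e_proc e) x.+1 =
    (step t (e_proc e) (state_before t ev (e_proc e) x) (e_in e)).1.1.
Proof. by move=> h; rewrite sb_succ h eqxx. Qed.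

Lemma sb_mono1 n (M : eqType) (R : rcfType) t (ev : seq (event n M R)) p x :
  (forall m s j, saved (state_before t ev p x) m s j \subset saved (state_before t ev p x.+1) m s j) /\
  (forall s j, signed (state_before t ev p x) s j -> signed (state_before t ev p x.+1) s j) /\
  (forall s j, deliv (state_before t ev p x) s j -> deliv (state_before t ev p x.+1) s j).
Proof.
rewrite sb_succ; case: (onth ev x) => [e|]; last by [].
case: (e_proc e == p); last by [].
exact: step_mono.
Qed.

Lemma sb_mono n (M : eqType) (R : rcfType) t (ev : seq (event n M R)) p x y : x <= y ->
  (forall m s j, saved (state_before t ev p x) m s j \subset saved (state_before t ev p y) m s j) /\
  (forall s j, signed (state_before t ev p x) s j -> signed (state_before t ev p y) s j) /\
  (forall s j, deliv (state_before t ev p x) s j -> deliv (state_before t ev p y) s j).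
Proof.
move/subnK <-; elim: (y - x) => [|k [IH1 [IH2 IH3]]] /=; first by rewrite add0n.
have [H1 [H2 H3]] := sb_mono1 t ev p (k + x).
rewrite addSn; split; [|split].
- move=> m s j; exact: subset_trans (IH1 m s j) (H1 m s j).
- by move=> s j /IH2 /H2.
- by move=> s j /IH3 /H3.
Qed.

Lemma inv_I0 n (M : eqType) (R : rcfType) t d (B : {set 'I_n}) (ev : seq (event n M R)) T
   i m sn x0 tau0 :
  valid_exec t d B ev T -> onth ev x0 = Some (Event i tau0 (InBcast n m sn)) ->
  forall x p m', i \in saved (state_before t ev p x) m' sn i -> m' = m.
Proof.
move=> [hcor [hchr [hsrc [hdup [hbyz [huniq hadv]]]]]] hx0 x.
elim: x {-2}x (leqnn x) => [|x IH] y hy p m'.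
  by move: hy; rewrite leqn0 => /eqP->; rewrite sb0 /= in_set0.
move: hy; rewrite leq_eqVlt => /orP [/eqP->|hy]; last exact: IH.
rewrite sb_succ; case h: (onth ev x) => [e|]; last exact: IH.
case: eqP => [hp|_]; last exact: IH.
move=> /step_saved_src [H|[[hin hq]|[src [sigs [hin hs]]]]].
- exact: IH H.
- have hpr : e_proc e = e_proc (Event i tau0 (InBcast n m sn)) by rewrite hp hq.
  have exx := huniq _ _ _ _ _ _ _ h hx0 hpr hin erefl.
  by move: h; rewrite exx hx0 => -[] E; subst e; case: hin.
- case: src hin => [k r|q] hin.
  + have [hk [ek [hek [hout _]]]] := hsrc _ _ _ _ _ h hin.
    rewrite (out_at_eq _ hek) in hout.
    have [hsig _] := step_out hout.
    rewrite /= -(sb_after _ hek) in hsig.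
    apply: (IH k.+1 hk (e_proc ek)); by rewrite -hsig.
  + have [_ hall] := hbyz _ _ _ _ h hin.
    have hiB : i \notin B := hcor _ _ hx0.
    exact: (IH x (leqnn x) i m' (hall i hs hiB)).
Qed.

Lemma inv_I3 n (M : eqType) (R : rcfType) t (ev : seq (event n M R)) x p :
  forall s j, deliv (state_before t ev p x) s j -> signed (state_before t ev p x) s j.
Proof.
elim: x => [|x IH]; first by rewrite sb0.
rewrite sb_succ; case: (onth ev x) => [e|] //; case: eqP => _ //.
exact: step_deliv_signed.
Qed.

Lemma inv_I1 n (M : eqType) (R : rcfType) t d (B : {set 'I_n}) (ev : seq (event n M R)) T
   i m sn x0 tau0 :
  valid_exec t d B ev T -> onth ev x0 = Some (Event i tau0 (InBcast n m sn)) ->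
  forall x p, deliv (state_before t ev p x) sn i ->
  exists z e, z < x /\ onth ev z = Some e /\ e_proc e = p /\ deliv_at t ev z = Some (m, sn, i).
Proof.
move=> hv hx0; elim=> [|x IH] p; first by rewrite sb0.
case hd: (deliv (state_before t ev p x) sn i).
  by move=> _; have [z [e [hz He]]] := IH p hd; exists z, e; split => //; exact: ltnW.
rewrite sb_succ; case h: (onth ev x) => [e|]; last by rewrite hd.
case: eqP => [hp|_]; last by rewrite hd.
move/(step_deliv_new (negbT hd)) => [m' [hres hin]].
rewrite -hp -(sb_after _ h) in hin.
have Em := inv_I0 hv hx0 hin; subst m'.
exists x, e; split => //; split => //; split => //.
by rewrite (deliv_at_eq _ h) hp.
Qed.

Lemma inv_I2 n (M : eqType) (R : rcfType) t d (B : {set 'I_n}) (ev : seq (event n M R)) T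
   i m sn x0 tau0 :
  valid_exec t d B ev T -> onth ev x0 = Some (Event i tau0 (InBcast n m sn)) ->
  forall x p, signed (state_before t ev p x) sn i ->
  exists z e r S, z < x /\ onth ev z = Some e /\ e_proc e = p /\
    onth (out_at t ev z) r = Some (Bundle m sn i S) /\ p \in S.
Proof.
move=> hv hx0; elim=> [|x IH] p; first by rewrite sb0.
case hd: (signed (state_before t ev p x) sn i).
  by move=> _; have [z [e [r [S [hz He]]]]] := IH p hd; exists z, e, r, S; split => //; exact: ltnW.
rewrite sb_succ; case h: (onth ev x) => [e|]; last by rewrite hd.
case: eqP => [hp|_]; last by rewrite hd.
move/(step_signed_new (negbT hd)) => [r [m' [S [hout hpS]]]].
have [hsig hiS] := step_out hout.
rewrite /= -hp -(sb_after _ h) hp in hsig hiS.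
have Em : m' = m by apply: (inv_I0 hv hx0 (p := p) (x := x.+1)); rewrite -hsig.
subst m'.
exists x, e, r, S; split => //; split => //; split => //.
by rewrite (out_at_eq _ h) hp.
Qed.


Lemma card_sum_in (T : finType) (A : {set T}) (P : pred T) :
  #|[set x in A | P x]| = \sum_(x in A) (P x : nat).
Proof.
rewrite -sum1_card big_mkcond [RHS]big_mkcond /=.
by apply: eq_bigr => x _; rewrite !inE; case: (x \in A); case: (P x).
Qed.

Lemma sum_mem (T : finType) (A : {set T}) : \sum_x (x \in A : nat) = #|A|.
Proof.
rewrite -sum1_card [RHS]big_mkcond /=.
by apply: eq_bigr => x _; case: (x \in A).
Qed.

Lemma count_lemma n (B P1 : {set 'I_n}) (Qf : 'I_n -> {set 'I_n}) (a k : nat) :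
  (forall p, p \in P1 -> Qf p \subset ~: B /\ a <= #|Qf p|) -> a <= #|P1| ->
  (#|~: B| * k < 2 * (a * a))%N ->
  exists2 q, q \notin B & (k < 2 * #|[set p in P1 | q \in Qf p]|)%N.
Proof.
move=> hQ hP hk.
case: (boolP [exists q, (q \notin B) && (k < 2 * #|[set p in P1 | q \in Qf p]|)]).
  by move/existsP => [q /andP [h1 h2]]; exists q.
move/existsPn => hn; exfalso.
have H1 : forall q, 2 * #|[set p in P1 | q \in Qf p]| <= (if q \in B then 0 else k).
  move=> q; case: ifP => hqB.
    suff -> : [set p in P1 | q \in Qf p] = set0 by rewrite cards0.
    apply/setP => p; rewrite !inE; case hp: (p \in P1) => //=.
    have [/subsetP hs _] := hQ p hp.
    by apply/negP => /hs; rewrite inE hqB.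
  by move: (hn q); rewrite hqB /= => h; rewrite leqNgt.
have cnt : \sum_q #|[set p in P1 | q \in Qf p]| = \sum_(p in P1) #|Qf p|.
  under eq_bigr => q _ do rewrite card_sum_in.
  rewrite exchange_big /=.
  by apply: eq_bigr => p _; rewrite sum_mem.
have lo : a * a <= \sum_(p in P1) #|Qf p|.
  apply: (@leq_trans (#|P1| * a)); first by rewrite leq_mul2r hP orbT.
  rewrite -sum_nat_const; apply: leq_sum => p hp; exact: (hQ p hp).2.
have hi : 2 * \sum_q #|[set p in P1 | q \in Qf p]| <= #|~: B| * k.
  rewrite big_distrr /=.
  apply: (@leq_trans (\sum_q (if q \in B then 0 else k))); first exact: leq_sum.
  rewrite -sum_nat_const [X in _ <= X]big_mkcond /=; apply: leq_sum => q _; rewrite inE.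
  by case: (q \in B).
move: hk; rewrite ltnNge => /negP; apply.
apply: leq_trans _ hi; rewrite cnt leq_mul2l lo orbT //.
Qed.


Lemma real_bound (R : rcfType) (c d k : nat) : (d < c)%N ->
  ((d%:R : R) < c%:R - Num.sqrt (c%:R * (k%:R / 2%:R)))%R ->
  (c * k < 2 * ((c - d) * (c - d)))%N.
Proof.
Local Open Scope ring_scope.
move=> hdc h.
set s := Num.sqrt _ in h.
have hs0 : 0 <= s := sqrtr_ge0 _.
have hX : 0 <= (c%:R : R) * (k%:R / 2%:R) by apply: mulr_ge0; [exact: ler0n | apply: divr_ge0; exact: ler0n].
have hs2 : s ^+ 2 = (c%:R : R) * (k%:R / 2%:R) by rewrite sqr_sqrtr.
have ha : (c - d)%:R = (c%:R - d%:R : R) by rewrite natrB // ltnW.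
rewrite -(ltr_nat R) !natrM ha.
have : s < c%:R - d%:R by lra.
move=> hlt.
have h2 : (c%:R : R) * (k%:R / 2%:R) < (c%:R - d%:R) * (c%:R - d%:R) by nra.
have -> : (c%:R * k%:R : R) = 2%:R * ((c%:R : R) * (k%:R / 2%:R)) by field.
rewrite ltr_pM2l //; exact: ltr0n.
Qed.
Local Close Scope ring_scope.



Lemma fchoice (A B : Type) (P : A -> B -> Prop) :
  (forall a, exists b, P a b) -> exists f, forall a, P a (f a).
Proof.
move=> H; exists (fun a => proj1_sig (constructive_indefinite_description _ (H a))).
move=> a; exact: proj2_sig (constructive_indefinite_description _ (H a)).
Qed.

Lemma time_le n (M : eqType) (R : rcfType) (ev : seq (event n M R)) :
  (forall x y ex ey, (x < y)%N -> onth ev x = Some ex -> onth ev y = Some ey ->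
     (e_time ex <= e_time ey)%R) ->
  forall z y ez ey, (z <= y)%N -> onth ev z = Some ez -> onth ev y = Some ey ->
     (e_time ez <= e_time ey)%R.
Proof.
move=> hchr z y ez ey; rewrite leq_eqVlt => /orP [/eqP->|hlt] h1 h2.
  by move: h1; rewrite h2 => -[->].
exact: hchr hlt h1 h2.
Qed.

Lemma recv_from n (M : eqType) (R : rcfType) t d (B : {set 'I_n}) (ev : seq (event n M R)) T
  k ek r b0 p :
  valid_exec t d B ev T -> onth ev k = Some ek -> onth (out_at t ev k) r = Some b0 ->
  receives ev p k r ->
  exists y e, onth ev y = Some e /\ e_proc e = p /\ (exists src, e_in e = InRecv src b0) /\
    e_time e = (e_time ek + 1)%R.
Proof.
move=> [hcor [hchr [hsrc _]]] hk hout [y [e [b [hy [hp hin]]]]].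
have [_ [ek' [hk' [hout' ht]]]] := hsrc _ _ _ _ _ hy hin.
move: hk'; rewrite hk => -[E]; subst ek'.
move: hout'; rewrite hout => -[E]; subst b.
exists y, e; split => //; split => //; split => //; by exists (FromCorrect n k r).
Qed.

Lemma recv_sig n (M : eqType) (R : rcfType) t (ev : seq (event n M R)) q y e src m sn j S :
  onth ev y = Some e -> e_proc e = q -> e_in e = InRecv src (Bundle m sn j S) -> j \in S ->
  signed (state_before t ev q y.+1) sn j /\
  (deliv (state_before t ev q y) sn j -> deliv (state_before t ev q y.+1) sn j) /\
  (~~ deliv (state_before t ev q y) sn j ->
     S \subset saved (state_before t ev q y.+1) m sn j /\
     ((n + t < 2 * #|saved (state_before t ev q y.+1) m sn j|)%N ->
        deliv (state_before t ev q y.+1) sn j)).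
Proof.
move=> hy hq hin hj.
rewrite -hq (sb_after _ hy) hin.
have [_ [H2 H3]] := step_mono t (e_proc e) (state_before t ev (e_proc e) y) (InRecv src (Bundle m sn j S)).
case hd: (deliv (state_before t ev (e_proc e) y) sn j).
  split; first by apply: H2; apply: inv_I3.
  by split; [move=> _; apply: H3 | ].
have [h1 [h2 h3]] := step_accept t (e_proc e) src m (negbT hd) hj.
by split => //; split => //.
Qed.

Theorem mainTheorem9 (R : rcfType) (M : eqType) (n t d : nat) (B : {set 'I_n})
    (ev : seq (event n M R)) (T : R) (i : 'I_n) (m : M) (sn x0 : nat) (tau0 : R) :
  (#|B| <= t)%N ->
  (d < n - #|B|)%N ->
  (3 * t + 2 * d < n)%N ->
  valid_exec t d B ev T ->
  onth ev x0 = Some (Event i tau0 (InBcast n m sn)) ->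
  ((d%:R : R) < (n - #|B|)%:R - Num.sqrt ((n - #|B|)%:R * ((n + t)%:R / 2%:R)))%R ->
  (tau0 + 3%:R <= T)%R ->
  exists P : {set 'I_n}, P \subset ~: B /\ (n - #|B| - d <= #|P|)%N /\
    forall p, p \in P -> exists x e, onth ev x = Some e /\ e_proc e = p /\
      (e_time e <= tau0 + 3%:R)%R /\ deliv_at t ev x = Some (m, sn, i).
Proof.
move=> hB hdc hn hv hx0 hsq hT.
have hv' := hv; case: hv' => [hcor [hchr [hsrc [hdup [hbyz [huniq hadv]]]]]].
have hT1 : (tau0 + 1 <= T)%R by lra.
set S0 := i |: saved (state_before t ev i x0) m sn i.
have hout0 : onth (out_at t ev x0) 0 = Some (Bundle m sn i S0) by rewrite (out_at_eq _ hx0).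
have hiS0 : i \in S0 by apply: setU11.
have [P1 [hP1B [hP1c hP1r]]] := hadv _ _ _ _ hx0 hout0 hT1.
have step2 : forall p, exists Q : {set 'I_n}, p \in P1 -> Q \subset ~: B /\
    (n - #|B| - d <= #|Q|)%N /\ forall q, q \in Q -> exists y e S src,
    onth ev y = Some e /\ e_proc e = q /\ (e_time e <= tau0 + 2%:R)%R /\
    e_in e = InRecv src (Bundle m sn i S) /\ p \in S /\ i \in S.
  move=> p; case: (boolP (p \in P1)) => hp; last by exists set0.
  have [y [e [hy [hpe [[src hin] hte]]]]] := recv_from hv hx0 hout0 (hP1r p hp).
  have [hsg _] := recv_sig t hy hpe hin hiS0.
  have [z [ez [r [S [hz [hez [hpz [houtz hpS]]]]]]]] := inv_I2 hv hx0 hsg.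
  have htz : (e_time ez <= tau0 + 1)%R.
    by have := @time_le _ _ _ ev hchr z y _ _ hz hez hy; rewrite hte.
  have hiS : i \in S.
    have houtz' := houtz; rewrite (out_at_eq _ hez) in houtz'.
    by have [_ h] := step_out houtz'.
  have hTz : (e_time ez + 1 <= T)%R by lra.
  have [Q [hQB [hQc hQr]]] := hadv _ _ _ _ hez houtz hTz.
  exists Q => _; split => //; split => //.
  move=> q hq; have [y' [e' [hy' [hqe [[src' hin'] hte']]]]] := recv_from hv hez houtz (hQr q hq).
  exists y', e', S, src'; split => //; split => //; split; last by [].
  rewrite hte'; lra.
have [Qf hQf] := fchoice step2.
have hcard : #|~: B| = n - #|B| by apply/eqP; rewrite -(eqn_add2l #|B|) cardsC card_ord subnKC //; by have := max_card (mem B); rewrite card_ord.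
have hreal := real_bound hdc hsq.
have hQf2 : forall p, p \in P1 -> Qf p \subset ~: B /\ (n - #|B| - d <= #|Qf p|)%N.
  by move=> p hp; have [a [b _]] := hQf p hp.
have hk : (#|~: B| * (n + t) < 2 * ((n - #|B| - d) * (n - #|B| - d)))%N by rewrite hcard.
have [q hqB hq] := count_lemma hQf2 hP1c hk.
set P' := [set p in P1 | q \in Qf p] in hq.
have step3 : forall p, exists y, p \in P' -> exists e S src, onth ev y = Some e /\
    e_proc e = q /\ (e_time e <= tau0 + 2%:R)%R /\ e_in e = InRecv src (Bundle m sn i S) /\
    p \in S /\ i \in S.
  move=> p; case: (boolP (p \in P')) => hp; last by exists 0.
  move: hp; rewrite inE => /andP [hp1 hqp].
  have [_ [_ H]] := hQf p hp1.
  have [y [e [S [src H']]]] := H q hqp.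
  by exists y => _; exists e, S, src.
have [yf hyf] := fchoice step3.
have hP'0 : (0 < #|P'|)%N by move: hq; case: #|P'| => //; rewrite muln0.
have [ps hps hY] := eq_bigmax_cond yf hP'0.
have [e [S [src [hYe [hqe [hte [hin [hpsS hiS]]]]]]]] := hyf ps hps.
have hdq : deliv (state_before t ev q (yf ps).+1) sn i.
  have [_ [hdm hnd]] := recv_sig t hYe hqe hin hiS.
  case hd: (deliv (state_before t ev q (yf ps)) sn i); first exact: hdm.
  have [_ hfin] := hnd (negbT hd); apply: hfin.
  apply: leq_trans hq _; rewrite leq_mul2l; apply/orP; right; apply: subset_leq_card.
  apply/subsetP => p hp.
  have hle : (yf p <= yf ps)%N by rewrite -hY; exact: leq_bigmax_cond.
  have [e' [S' [src' [hy' [hqe' [_ [hin' [hpS' hiS']]]]]]]] := hyf p hp.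
  have [_ [_ hnd']] := recv_sig t hy' hqe' hin' hiS'.
  have hnd'' : ~~ deliv (state_before t ev q (yf p)) sn i.
    apply/negP => hdd; have [_ [_ H3]] := sb_mono t ev q hle.
    by rewrite (H3 _ _ hdd) in hd.
  have [hsub _] := hnd' hnd''.
  have hle' : ((yf p).+1 <= (yf ps).+1)%N by [].
  have [H1 _] := sb_mono t ev q hle'.
  exact: (subsetP (H1 _ _ _)) _ ((subsetP hsub) _ hpS').
have [z [ez [hz [hez [hqz hdz]]]]] := inv_I1 hv hx0 hdq.
have htz : (e_time ez <= tau0 + 2%:R)%R.
  have hh := @time_le _ _ _ ev hchr z (yf ps) _ _ hz hez hYe; exact: le_trans hh hte.
have hdz' := hdz; rewrite (deliv_at_eq _ hez) in hdz'.
have [r [S3 [hout3 hS3]]] := step_deliv_res hdz'.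
have [_ hiS3] := step_out hout3.
rewrite -(out_at_eq _ hez) /= in hout3 hiS3.
have hT3 : (e_time ez + 1 <= T)%R by lra.
have [P3 [hP3B [hP3c hP3r]]] := hadv _ _ _ _ hez hout3 hT3.
exists P3; split => //; split => //.
move=> p hp.
have [y [e' [hy [hpe [[src' hin'] hte']]]]] := recv_from hv hez hout3 (hP3r p hp).
have [_ [hdm hnd]] := recv_sig t hy hpe hin' hiS3.
have hdp : deliv (state_before t ev p y.+1) sn i.
  case hd: (deliv (state_before t ev p y) sn i); first exact: hdm.
  have [hsub hfin] := hnd (negbT hd); apply: hfin; apply: leq_trans hS3 _.
  by rewrite leq_mul2l subset_leq_card ?orbT.
have [z' [ez' [hz' [hez' [hpz' hdz'']]]]] := inv_I1 hv hx0 hdp.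
exists z', ez'; split => //; split => //; split => //.
have := @time_le _ _ _ ev hchr z' y _ _ hz' hez' hy; rewrite hte'; lra.
Qed.
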